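(* Let $d$ be a positive integer and suppose that there is a function $\varepsilon:\mathbb{N}\to\mathbb{R}$ with $\varepsilon(N)\to0$ such that for every $d$--regular bipartite graph $G$ on $2n$ vertices and every $0\leq k\leq n$ one has $\frac{\ln m_k(G)}{v(G)}\geq\mathcal{G}_d(k/n)-\varepsilon(v(G))$. Then for every $d$--regular bipartite graph $G$ on $v(G)=2n$ vertices and every integer $0\leq k\leq n$, $$\frac{\ln m_k(G)}{v(G)}\geq\mathcal{G}_d(p)-\frac{\ln v(G)}{v(G)},\qquad p=\frac kn.$$
   Context: $m_k(G)$ is the number of matchings of size $k$ in $G$. $\mathcal{G}_d(p)=\frac{1}{2}\left(p\ln\frac{d}{p}+(d-p)\ln\left(1-\frac{p}{d}\right)-2(1-p)\ln(1-p)\right)$ for $0\leq p\leq1$, with $0\ln(\cdot)=0$. *)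

(* Defs.v *)
From mathcomp Require Import all_boot.
From Stdlib Require Import Reals.

Set Implicit Arguments.
Unset Strict Implicit.
Unset Printing Implicit Defensive.

Definition simple_graph (T : finType) (e : rel T) : Prop :=
  (forall x y, e x y = e y x) /\ (forall x, e x x = false).

Definition regular (T : finType) (e : rel T) (d : nat) : Prop :=
  forall x : T, #|[set y | e x y]| = d.

Definition bipartite (T : finType) (e : rel T) : Prop :=
  exists A : {set T}, forall x y, e x y -> (x \in A) != (y \in A).

Definition edges (T : finType) (e : rel T) : {set {set T}} :=
  [set [set xy.1; xy.2] | xy in [set xy : T * T | e xy.1 xy.2]].

Definition is_matching (T : finType) (e : rel T) (M : {set {set T}}) : bool :=
  (M \subset edges e) &&
  [forall A in M, forall B in M, (A != B) ==> [disjoint A & B]].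

Definition m_ (T : finType) (e : rel T) (k : nat) : nat :=
  #|[set M : {set {set T}} | is_matching e M & #|M| == k]|.

Open Scope R_scope.

(* a * ln b with the convention 0 * ln(.) = 0 *)
Definition xln (a b : R) : R := if Req_EM_T a 0 then 0 else a * ln b.

Definition Gd (d : nat) (p : R) : R :=
  / 2 * (xln p (INR d / p) + xln (INR d - p) (1 - p / INR d)
         - 2 * xln (1 - p) (1 - p)).

(* Main.v *)
Require Import Defs.
From mathcomp Require Import all_boot all_order all_algebra zify ring.
Set Implicit Arguments. Unset Strict Implicit. Unset Printing Implicit Defensive.
Import Order.TTheory GRing.Theory Num.Theory.
Local Open Scope nat_scope.
Local Open Scope nat_scope.

Section General.
Variable U : finType.

Lemma exit_edge (r : rel U) (Y : {set U}) x y :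
  connect r x y -> x \in Y -> y \notin Y ->
  exists u v, [/\ u \in Y, v \notin Y & r u v].
Proof.
move/connectP=> [p pth ->]; elim: p x pth => [|z p IH] x /=.
  by move=> _ ->.
case/andP=> rxz pth xY lY.
case: (boolP (z \in Y)) => zY; first exact: IH pth zY lY.
by exists x, z.
Qed.

Lemma sum_ind (P Q : {set U}) : \sum_(x in P) ((x \in Q) : nat) = #|P :&: Q|.
Proof.
rewrite -sum1_card big_mkcond /= [RHS]big_mkcond; apply: eq_bigr => x _.
by rewrite inE; case: (x \in P); case: (x \in Q).
Qed.

Lemma cover_U1 (g : {set U}) (N : {set {set U}}) : cover (g |: N) = g :|: cover N.
Proof.
apply/setP=> x; rewrite inE; apply/bigcupP/orP.
  case=> E; rewrite !inE => /orP[/eqP->|EN] xE; [by left|right].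
  by apply/bigcupP; exists E.
case=> [xg|/bigcupP[E EN xE]]; first by exists g; rewrite ?setU11.
by exists E; rewrite // inE EN orbT.
Qed.

End General.

Section LC.
Variables (T : finType) (e : rel T).
Hypothesis irr : forall x, e x x = false.

Notation Ed := (edges e).
Notation SS := {set {set T}}.

Lemma edge2 E : E \in Ed -> #|E| = 2.
Proof.
case/imsetP => xy; rewrite inE => exy ->; rewrite cards2.
have -> : xy.1 != xy.2 by apply: contraTneq exy => ->; rewrite irr.
by [].
Qed.

Lemma matchP M : is_matching e M ->
  (M \subset Ed) /\ (forall E F, E \in M -> F \in M -> E != F -> [disjoint E & F]).
Proof.
case/andP=> sub /forall_inP H; split=> // E F EM FM nEF.
by move: (H E EM) => /forall_inP /(_ F FM) /implyP; apply.
Qed.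

Lemma matchI (P : SS) : (P \subset Ed) ->
  (forall E F, E \in P -> F \in P -> E != F -> [disjoint E & F]) -> is_matching e P.
Proof.
move=> sub H; apply/andP; split=> //; apply/forall_inP=> E EP; apply/forall_inP=> F FP.
by apply/implyP; apply: H.
Qed.

Lemma match_eq M E F x : is_matching e M -> E \in M -> F \in M ->
  x \in E -> x \in F -> E = F.
Proof.
case/matchP=> _ H EM FM xE xF; apply/eqP/negPn/negP => nEF.
by rewrite (disjointFr (H E F EM FM nEF) xE) in xF.
Qed.

Lemma match_sub (M N : SS) : is_matching e M -> N \subset M -> is_matching e N.
Proof.
case/matchP=> sub H NM; apply: matchI; first exact: subset_trans NM sub.
by move=> E F EN FN; apply: H; apply: (subsetP NM).
Qed.

Lemma card_coverM M : is_matching e M -> #|cover M| = 2 * #|M|.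
Proof.
move=> Mm; have [sub H] := matchP Mm.
have tr : trivIset M by apply/trivIsetP => E F EM FM; apply: H.
rewrite -(eqP tr) mulnC -sum_nat_const; apply: eq_bigr => E EM.
by apply: edge2; apply: (subsetP sub).
Qed.

Definition sd (A B : SS) : SS := (A :\: B) :|: (B :\: A).
Definition adj (S : SS) : rel {set T} :=
  fun f g => [&& f \in S, g \in S & ~~ [disjoint f & g]].
Definition Comps (S : SS) : {set SS} :=
  equivalence_partition (connect (adj S)) S.

Lemma adj_sym S : symmetric (adj S).
Proof. by move=> f g; rewrite /adj disjoint_sym andbA [(f \in S) && _]andbC -andbA. Qed.

Lemma Comps_part S : partition (Comps S) S.
Proof.
apply: equivalence_partitionP => x y z _ _ _; split; first exact: connect0.
by move=> cxy; apply: (same_connect (sym_connect_sym (@adj_sym S)) cxy).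
Qed.

Lemma inComps S X : X \in Comps S ->
  exists2 x, x \in S & X = [set y in S | connect (adj S) x y].
Proof. by case/imsetP=> x xS ->; exists x. Qed.

Lemma Comps_sub S X : X \in Comps S -> X \subset S.
Proof. by case/inComps=> x xS ->; apply/subsetP=> y; rewrite inE => /andP[]. Qed.

Lemma Comps_closed S X f g : X \in Comps S -> f \in X -> g \in S ->
  ~~ [disjoint f & g] -> g \in X.
Proof.
case/inComps=> x xS -> ; rewrite !inE => /andP[fS cxf] gS dfg.
rewrite gS; apply: connect_trans cxf (connect1 _).
by rewrite /adj fS gS.
Qed.

Lemma sdC A B : sd A B = sd B A.
Proof. by rewrite /sd setUC. Qed.

Definition Inv (A B Y : SS) := #|Y| <= #|cover (A :&: Y) :&: cover (B :&: Y)| + 1.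

Lemma InvC A B Y : Inv A B Y = Inv B A Y.
Proof. by rewrite /Inv setIC. Qed.

Lemma step (A B Y : SS) (g h : {set T}) : is_matching e A -> is_matching e B ->
  Y \subset sd A B -> g \in sd A B -> g \notin Y -> h \in Y ->
  ~~ [disjoint g & h] -> g \in B -> Inv A B Y -> Inv A B (g |: Y).
Proof.
move=> mA mB YS gS gY hY dgh gB; rewrite /Inv.
have gA : g \notin A by move: gS; rewrite !inE gB; case: (g \in A).
have -> : A :&: (g |: Y) = A :&: Y.
  by apply/setP=> E; rewrite !inE; case: eqP => // ->; rewrite (negbTE gA).
have -> : B :&: (g |: Y) = g |: (B :&: Y).
  by apply/setP=> E; rewrite !inE; case: eqP => // ->; rewrite gB.
rewrite cover_U1 cardsU1 gY add1n => HI.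
set VA := cover (A :&: Y); set VB := cover (B :&: Y).
suff lt : #|VA :&: VB| < #|VA :&: (g :|: VB)| by move: HI lt; rewrite /VA /VB; lia.
apply: proper_card; apply/properP; split.
  by apply: setIS; apply: subsetUr.
have /pred0Pn [w /andP[/= wg wh]] := dgh.
have hS : h \in sd A B by apply: (subsetP YS).
have hng : h != g by apply: contraNneq gY => <-.
have hB : h \notin B.
  by apply/negP=> hB; move/eqP: hng; apply; apply: (@match_eq B h g w).
have hA : h \in A by move: hS; rewrite !inE (negbTE hB); case: (h \in A).
exists w.
  rewrite !inE wg /= andbT; apply/bigcupP; exists h => //; by rewrite inE hA hY.
rewrite !inE negb_and; apply/orP; right; apply/bigcupP=> [[E]].
rewrite inE => /andP[EB EY] wE.
have gE : g = E by apply: (@match_eq B g E w).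
by move: gY; rewrite gE EY.
Qed.

Lemma grow (A B X : SS) : is_matching e A -> is_matching e B ->
  X \in Comps (sd A B) -> Inv A B X.
Proof.
move=> mA mB XC; have [x xS defX] := inComps XC.
have XS := Comps_sub XC.
have xX : x \in X by rewrite defX inE xS connect0.
suff H : forall m Y, #|X :\: Y| <= m -> x \in Y -> Y \subset X -> Inv A B Y -> Inv A B X.
  apply: (H #|X| [set x]); rewrite ?cards1 ?set11 ?sub1set //.
  - by apply: subset_leq_card; apply: subsetDl.
  - by rewrite /Inv cards1 leq_addl.
elim=> [|m IH] Y.
  rewrite leqn0 cards_eq0 setD_eq0 => XY _ YX.
  by have -> : Y = X by apply/eqP; rewrite eqEsubset YX XY.
move=> cardm xY YX IY.
case: (boolP (X \subset Y)) => XY.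
  by have -> : X = Y by apply/eqP; rewrite eqEsubset YX XY.
have [g0 g0X g0Y] : exists2 g0, g0 \in X & g0 \notin Y.
  by move/subsetPn: XY => [g0 ? ?]; exists g0.
have cg0 : connect (adj (sd A B)) x g0 by move: g0X; rewrite defX inE => /andP[].
have [u [v [uY vY ruv]]] := exit_edge cg0 xY g0Y.
have /and3P[uS vS duv] := ruv.
have uX : u \in X by apply: (subsetP YX).
have vX : v \in X.
  rewrite defX inE vS /=; apply: connect_trans (connect1 ruv).
  by move: uX; rewrite defX inE => /andP[].
apply: (IH (v |: Y)).
- rewrite -ltnS; apply: leq_trans cardm; apply: proper_card; apply/properP; split.
    by apply: setDS; apply: subsetUr.
  by exists v; rewrite !inE ?vX ?eqxx // vY.
- by rewrite !inE xY orbT.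
- by rewrite subUset sub1set vX YX.
have YS : Y \subset sd A B := subset_trans YX XS.
have dvu : ~~ [disjoint v & u] by rewrite disjoint_sym.
case: (boolP (v \in B)) => vB; first exact: (@step A B Y v u).
have vA : v \in A by move: vS; rewrite !inE (negbTE vB); case: (v \in A).
have sBA : sd B A = sd A B := sdC B A.
rewrite InvC; apply: (@step B A Y v u); rewrite ?sBA //.
by rewrite InvC.
Qed.

End LC.

Local Open Scope nat_scope.
Local Open Scope nat_scope.

Lemma odd_bal a b : b <= a+1 -> a <= b+1 -> odd (a + b) = (b == a+1) || (a == b+1).
Proof.
move=> h1 h2; have [->|[->|->]] : b = a \/ b = a+1 \/ a = b+1 by lia.
- rewrite oddD addbb; symmetry; apply/negbTE; apply/norP; split; apply/eqP; lia.
- by rewrite eqxx oddD addn1 oddS; case: (odd a).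
- by rewrite eqxx orbT oddD addn1 oddS; case: (odd b).
Qed.

Lemma sum_bal a b : b <= a+1 -> a <= b+1 -> b + (a == b+1) = a + (b == a+1).
Proof.
move=> h1 h2; have [->|[->|->]] : b = a \/ b = a+1 \/ a = b+1 by lia.
- by [].
- have -> : (a == a + 1 + 1) = false by apply/eqP; lia.
  by rewrite eqxx addn0 addn1.
- have -> : (b == b + 1 + 1) = false by apply/eqP; lia.
  by rewrite eqxx addn0 addn1.
Qed.

Section LC2.
Variables (T : finType) (e : rel T).
Hypothesis irr : forall x, e x x = false.
Notation SS := {set {set T}}.

Lemma bal (A B X : SS) : is_matching e A -> is_matching e B ->
  X \in Comps (sd A B) ->
  [/\ #|B :&: X| <= #|A :&: X| + 1, #|A :&: X| <= #|B :&: X| + 1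
    & #|X| = #|A :&: X| + #|B :&: X|].
Proof.
move=> mA mB XC; have I := grow mA mB XC; rewrite /Inv in I.
have XS := Comps_sub XC.
have cX : #|X| = #|A :&: X| + #|B :&: X|.
  rewrite -cardsUI.
  have -> : (A :&: X) :&: (B :&: X) = set0.
    apply/setP=> E; rewrite !inE; have := subsetP XS E; rewrite !inE.
    by case: (E \in A); case: (E \in B); case: (E \in X) => //= ->.
  have -> : (A :&: X) :|: (B :&: X) = X.
    apply/setP=> E; rewrite !inE; have := subsetP XS E; rewrite !inE.
    by case: (E \in A); case: (E \in B); case: (E \in X) => //= ->.
  by rewrite cards0 addn0.
have cA := card_coverM irr (match_sub mA (subsetIl A X)).
have cB := card_coverM irr (match_sub mB (subsetIl B X)).
have l1 := subset_leq_card (subsetIl (cover (A :&: X)) (cover (B :&: X))).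
have l2 := subset_leq_card (subsetIr (cover (A :&: X)) (cover (B :&: X))).
split => //; lia.
Qed.

Definition cps (p : SS * SS) : {set SS} :=
  Comps (sd p.1 p.2) :&: [set X : SS | #|p.2 :&: X| == #|p.1 :&: X| + 1].
Definition cms (p : SS * SS) : {set SS} :=
  Comps (sd p.1 p.2) :&: [set X : SS | #|p.1 :&: X| == #|p.2 :&: X| + 1].
Definition rr (S : SS) := #|Comps S :&: [set X : SS | odd #|X|]|.

Lemma cpm_r (A B : SS) : is_matching e A -> is_matching e B ->
  #|cps (A, B)| + #|cms (A, B)| = rr (sd A B).
Proof.
move=> mA mB; rewrite -cardsUI /rr.
have -> : cps (A, B) :&: cms (A, B) = set0.
  apply/setP=> X; rewrite !inE /=; apply/negbTE/negP => /andP[/andP[_ /eqP h1] /andP[_ /eqP h2]].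
  lia.
rewrite cards0 addn0; apply: eq_card => X; rewrite !inE /=.
case XC: (X \in Comps (sd A B)) => //=.
have [h1 h2 h3] := bal mA mB XC.
by rewrite h3 odd_bal.
Qed.

Lemma cpm_diff (A B : SS) : is_matching e A -> is_matching e B ->
  #|B :\: A| + #|cms (A, B)| = #|A :\: B| + #|cps (A, B)|.
Proof.
move=> mA mB.
have part := Comps_part (sd A B).
have sB : #|B :\: A| = \sum_(X in Comps (sd A B)) #|X :&: B|.
  have -> : B :\: A = sd A B :&: B.
    by apply/setP=> E; rewrite !inE; case: (E \in A); case: (E \in B).
  rewrite -sum_ind (set_partition_big _ part); apply: eq_bigr => X _.
  by rewrite sum_ind.
have sA : #|A :\: B| = \sum_(X in Comps (sd A B)) #|X :&: A|.
  have -> : A :\: B = sd A B :&: A.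
    by apply/setP=> E; rewrite !inE; case: (E \in A); case: (E \in B).
  rewrite -sum_ind (set_partition_big _ part); apply: eq_bigr => X _.
  by rewrite sum_ind.
have sm : #|cms (A, B)| = \sum_(X in Comps (sd A B))
             ((X \in [set X : SS | #|A :&: X| == #|B :&: X| + 1]) : nat).
  by rewrite sum_ind.
have sp : #|cps (A, B)| = \sum_(X in Comps (sd A B))
             ((X \in [set X : SS | #|B :&: X| == #|A :&: X| + 1]) : nat).
  by rewrite sum_ind.
rewrite sB sA sm sp -!big_split /=; apply: eq_bigr => X XC.
have [h1 h2 h3] := bal mA mB XC.
by rewrite !inE [X :&: B]setIC [X :&: A]setIC sum_bal.
Qed.

End LC2.

Local Open Scope nat_scope.
Local Open Scope nat_scope.

Section LC3.
Variables (T : finType) (e : rel T).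
Hypothesis irr : forall x, e x x = false.
Notation SS := {set {set T}}.

Definition Mset (j : nat) := [set M : SS | is_matching e M & #|M| == j].

Definition sw (t : (SS * SS) * SS) : (SS * SS) * SS :=
  (((t.1.1 :\: t.2) :|: (t.1.2 :&: t.2), (t.1.2 :\: t.2) :|: (t.1.1 :&: t.2)), t.2).

Lemma swK : involutive sw.
Proof.
case=> [[A B] X]; rewrite /sw /=; congr (_, _, _); apply/setP=> x; rewrite !inE;
by case: (x \in A); case: (x \in B); case: (x \in X).
Qed.

Lemma sw_sd (A B X : SS) : X \subset sd A B ->
  sd ((A :\: X) :|: (B :&: X)) ((B :\: X) :|: (A :&: X)) = sd A B.
Proof.
move=> XS; apply/setP=> x; have := subsetP XS x; rewrite !inE.
by case: (x \in A); case: (x \in B); case: (x \in X) => //= ->.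
Qed.

Lemma sw_I (A B X : SS) : ((A :\: X) :|: (B :&: X)) :&: X = B :&: X.
Proof.
apply/setP=> x; rewrite !inE.
by case: (x \in A); case: (x \in B); case: (x \in X).
Qed.

Lemma sw_card (A B X : SS) :
  #|(A :\: X) :|: (B :&: X)| + #|A :&: X| = #|A| + #|B :&: X|.
Proof.
have := cardsUI (A :\: X) (B :&: X).
have -> : (A :\: X) :&: (B :&: X) = set0.
  apply/setP=> x; rewrite !inE.
  by case: (x \in A); case: (x \in B); case: (x \in X).
rewrite cards0 addn0 => ->.
have := cardsID X A; rewrite setIC; lia.
Qed.

Lemma sw_match (A B X : SS) : is_matching e A -> is_matching e B ->
  X \in Comps (sd A B) -> is_matching e ((A :\: X) :|: (B :&: X)).
Proof.
move=> mA mB XC; have [sA _] := matchP mA; have [sB _] := matchP mB.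
have key : forall E F, E \in A :\: X -> F \in B :&: X -> [disjoint E & F].
  move=> E F; rewrite !inE => /andP[EX EA] /andP[FB FX].
  apply/negPn/negP => dEF.
  have /pred0Pn [w /andP[/= wE wF]] := dEF.
  case: (boolP (E \in B)) => EB.
    have EF : E = F by apply: (match_eq mB EB FB wE wF).
    by move: EX; rewrite EF FX.
  have ES : E \in sd A B by rewrite !inE EA EB.
  have := Comps_closed XC FX ES; rewrite disjoint_sym => /(_ dEF).
  by rewrite (negbTE EX).
apply: matchI.
  apply/subsetP=> E; rewrite !inE => /orP[/andP[_ EA]|/andP[EB _]].
    exact: (subsetP sA).
  exact: (subsetP sB).
move=> E F; rewrite !in_setU => /orP[EA|EB] /orP[FA|FB] nEF.
- have [_ H] := matchP mA; apply: H nEF.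
    by move: EA; rewrite inE => /andP[].
  by move: FA; rewrite inE => /andP[].
- exact: key.
- by rewrite disjoint_sym; apply: key.
- have [_ H] := matchP mB; apply: H nEF.
    by move: EB; rewrite inE => /andP[].
  by move: FB; rewrite inE => /andP[].
Qed.

Definition T1 (j : nat) (t : (SS * SS) * SS) :=
  (t.1 \in setX (Mset j) (Mset j.+2)) && (t.2 \in cps t.1).
Definition T2 (j : nat) (t : (SS * SS) * SS) :=
  (t.1 \in setX (Mset j.+1) (Mset j.+1)) && (t.2 \in cms t.1).

Lemma swfacts (A B X : SS) : is_matching e A -> is_matching e B ->
  X \in Comps (sd A B) ->
  [/\ is_matching e ((A :\: X) :|: (B :&: X)), is_matching e ((B :\: X) :|: (A :&: X)),
      X \in Comps (sd ((A :\: X) :|: (B :&: X)) ((B :\: X) :|: (A :&: X))),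
      #|(A :\: X) :|: (B :&: X)| + #|A :&: X| = #|A| + #|B :&: X| &
      #|(B :\: X) :|: (A :&: X)| + #|B :&: X| = #|B| + #|A :&: X| ].
Proof.
move=> mA mB XC; have XS := Comps_sub XC.
have XC' : X \in Comps (sd B A) by rewrite sdC.
split; [exact: sw_match | exact: sw_match | by rewrite sw_sd | exact: sw_card | exact: sw_card].
Qed.

Lemma T12 (j : nat) t : T1 j t -> T2 j (sw t).
Proof.
case: t => [[A B] X]; rewrite /T1 /T2 /sw; cbn [fst snd]; rewrite !inE.
case/andP=> /andP[/andP[mA /eqP cA] /andP[mB /eqP cB]] /andP[XC /eqP cX].
have [m1 m2 XC2 c1 c2] := swfacts mA mB XC.
rewrite m1 m2 XC2 sw_I sw_I.
cbn [fst snd] in *.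
by rewrite !eqn_leq; repeat (apply/andP; split); lia.
Qed.

Lemma T21 (j : nat) t : T2 j t -> T1 j (sw t).
Proof.
case: t => [[A B] X]; rewrite /T1 /T2 /sw; cbn [fst snd]; rewrite !inE.
case/andP=> /andP[/andP[mA /eqP cA] /andP[mB /eqP cB]] /andP[XC /eqP cX].
have [m1 m2 XC2 c1 c2] := swfacts mA mB XC.
rewrite m1 m2 XC2 sw_I sw_I.
cbn [fst snd] in *.
by rewrite !eqn_leq; repeat (apply/andP; split); lia.
Qed.

End LC3.

Local Open Scope nat_scope.
Local Open Scope nat_scope.

Section LC4.
Variables (T : finType) (e : rel T).
Hypothesis irr : forall x, e x x = false.
Notation SS := {set {set T}}.

Lemma F2 (j : nat) (p : SS * SS) : p \in setX (Mset e j) (Mset e j.+2) ->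
  #|cps p| * 2 = (rr (sd p.1 p.2)).+2.
Proof.
case: p => A B; rewrite !inE; cbn [fst snd].
case/andP=> /andP[mA /eqP cA] /andP[mB /eqP cB].
have h1 := cpm_r irr mA mB; have h2 := cpm_diff irr mA mB.
have h3 := cardsID B A; have h4 := cardsID A B; rewrite setIC in h4.
move: h1 h2 h3 h4 cA cB.
set a := #|A :\: B|; set b := #|B :\: A|; set c := #|B :&: A|.
set x := #|cps (A, B)|; set y := #|cms (A, B)|. lia.
Qed.

Lemma F0 (j : nat) (p : SS * SS) : p \in setX (Mset e j.+1) (Mset e j.+1) ->
  #|cms p| * 2 = rr (sd p.1 p.2).
Proof.
case: p => A B; rewrite !inE; cbn [fst snd].
case/andP=> /andP[mA /eqP cA] /andP[mB /eqP cB].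
have h1 := cpm_r irr mA mB; have h2 := cpm_diff irr mA mB.
have h3 := cardsID B A; have h4 := cardsID A B; rewrite setIC in h4.
move: h1 h2 h3 h4 cA cB.
set a := #|A :\: B|; set b := #|B :\: A|; set c := #|B :&: A|.
set x := #|cps (A, B)|; set y := #|cms (A, B)|. lia.
Qed.

Local Open Scope ring_scope.
Lemma LCq (j : nat) : (#|setX (Mset e j) (Mset e j.+2)|%:R : rat)
   <= #|setX (Mset e j.+1) (Mset e j.+1)|%:R.
Proof.
set P2 := setX (Mset e j) (Mset e j.+2); set P0 := setX (Mset e j.+1) (Mset e j.+1).
pose W (p : SS * SS) : rat := ((rr (sd p.1 p.2)).+2%:R)^-1.
have S1 : (#|P2|%:R : rat) = 2 * \sum_(p in P2) (#|cps p|%:R * W p).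
  rewrite mulr_sumr -sumr_const; apply: eq_bigr => p Hp.
  rewrite mulrA -natrM mulnC (F2 Hp) /W mulfV //.
  by rewrite pnatr_eq0.
have S2 : \sum_(p in P2) (#|cps p|%:R * W p) = \sum_(t | T1 e j t) W t.1.
  rewrite -(pair_big_dep (fun p => p \in P2) (fun p X => X \in cps p) (fun p _ => W p)).
  by apply: eq_bigr => p _; rewrite sumr_const mulr_natl.
have S3 : \sum_(t | T1 e j t) W t.1 = \sum_(t | T2 e j t) W t.1.
  rewrite [RHS](reindex_inj (can_inj (@swK T))).
  apply: eq_big => [t|t Ht].
    apply/idP/idP; first exact: T12.
    by move/T21; rewrite swK.
  move: Ht; case: t => [[A B] X]; rewrite /T1 !inE; cbn [fst snd].
  case/andP=> _ /andP[XC _]; rewrite /W /sw; cbn [fst snd].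
  by rewrite sw_sd // Comps_sub.
have S4 : \sum_(t | T2 e j t) W t.1 = \sum_(p in P0) (#|cms p|%:R * W p).
  rewrite -(pair_big_dep (fun p => p \in P0) (fun p X => X \in cms p) (fun p _ => W p)).
  by apply: eq_bigr => p _; rewrite sumr_const mulr_natl.
rewrite S1 S2 S3 S4 mulr_sumr -sumr_const.
apply: ler_sum => p Hp.
rewrite mulrA -natrM mulnC (F0 Hp) /W.
rewrite ler_pdivrMr ?ltr0n // mul1r ler_nat.
by apply: leq_trans (leqnSn _) (leqnSn _).
Qed.
Local Close Scope ring_scope.

Lemma LCm (j : nat) : m_ e j * m_ e j.+2 <= m_ e j.+1 * m_ e j.+1.
Proof.
change (#|Mset e j| * #|Mset e j.+2| <= #|Mset e j.+1| * #|Mset e j.+1|).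
by rewrite -!cardsX -(@ler_nat rat) LCq.
Qed.

End LC4.

Local Open Scope nat_scope.

Section SeqLC.
Variable a : nat -> nat.
Hypothesis LCa : forall j, (a j * a j.+2 <= a j.+1 * a j.+1)%N.
Hypothesis DN : forall j, (0 < a j.+1)%N -> (0 < a j)%N.

Lemma pos_le j k : (j <= k)%N -> (0 < a k)%N -> (0 < a j)%N.
Proof.
move=> jk; rewrite -(subnKC jk); elim: (k - j) => [|d IH]; first by rewrite addn0.
by rewrite addnS => /DN.
Qed.

Lemma zero_ge j k : (k <= j)%N -> a k = 0%N -> a j = 0%N.
Proof.
move=> kj ak0; apply/eqP; rewrite -leqn0 leqNgt; apply/negP => /(pos_le kj).
by rewrite ak0.
Qed.

Local Open Scope ring_scope.

Section Pos.
Variable K : nat.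
Let k := K.+1.
Hypothesis apos : (0 < a k)%N.
Let aKpos : (0 < a K)%N := DN apos.
Let rho : rat := (a k)%:R / (a K)%:R.

Let rho_gt0 : 0 < rho.
Proof. by rewrite /rho divr_gt0 // ltr0n. Qed.

Let up m : (a (k + m).+1)%:R <= rho * (a (k + m))%:R.
Proof.
elim: m => [|m IH].
  rewrite addn0 /rho mulrAC ler_pdivlMr ?ltr0n // -!natrM ler_nat mulnC.
  exact: LCa.
case: (posnP (a (k + m).+1)) => [z|p1].
  have z2 : a (k + m.+1).+1 = 0%N by apply: (zero_ge (k := (k + m).+1)) => //; lia.
  have z1 : a (k + m.+1) = 0%N by rewrite addnS.
  by rewrite z1 z2 mulr0.
have p0 : (0 < a (k + m))%N := DN p1.
rewrite -(@ler_pM2l _ (a (k + m))%:R) ?ltr0n //.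
apply: le_trans (_ : (a (k + m).+1)%:R * (a (k + m).+1)%:R <= _).
  by rewrite -!natrM ler_nat addnS; apply: LCa.
rewrite addnS.
have -> : (a (k+m))%:R * (rho * (a (k+m).+1)%:R) = (a (k+m).+1)%:R * (rho * (a (k+m))%:R) by ring.
by rewrite ler_pM2l ?ltr0n.
Qed.

Let pw_up m : (a (k + m))%:R <= rho ^+ m * (a k)%:R.
Proof.
elim: m => [|m IH]; first by rewrite addn0 expr0 mul1r.
rewrite addnS exprS -mulrA; apply: le_trans (up m) _.
by rewrite ler_pM2l.
Qed.

Let dn d i : (i + d.+1)%N = k -> rho * (a i)%:R <= (a i.+1)%:R.
Proof.
elim: d i => [|d IH] i.
  rewrite addn1 => -[->]; rewrite /rho divfK // pnatr_eq0 -lt0n //.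
move=> Hi.
have H1 : (i.+1 + d.+1)%N = k by rewrite addSn -addnS.
have := IH _ H1 => IH1.
have p1 : (0 < a i.+1)%N by apply: (pos_le (j := i.+1) (k := k)) => //; lia.
rewrite -(@ler_pM2r _ (a i.+1)%:R) ?ltr0n //.
apply: le_trans (_ : (a i)%:R * (a i.+2)%:R <= _); last first.
  by rewrite -!natrM ler_nat; apply: LCa.
have -> : rho * (a i)%:R * (a i.+1)%:R = (a i)%:R * (rho * (a i.+1)%:R) by ring.
by apply: ler_wpM2l; [rewrite ler0n | exact: IH1].
Qed.

Let pw_dn d : (d <= k)%N -> rho ^+ d * (a (k - d))%:R <= (a k)%:R.
Proof.
elim: d => [|d IH] Hd; first by rewrite subn0 expr0 mul1r.
rewrite exprSr -mulrA; apply: le_trans (IH (ltnW Hd)).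
apply: ler_wpM2l; first by rewrite exprn_ge0 // ltW.
have -> : (k - d = (k - d.+1).+1)%N by lia.
by apply: (dn (d := d)); lia.
Qed.

Lemma keyg j : (a j)%:R * rho ^+ k <= (a k)%:R * rho ^+ j.
Proof.
case: (leqP k j) => [kj|jk].
  rewrite -(subnKC kj) exprD; set m := (j - k)%N.
  rewrite [rho ^+ k * _]mulrC mulrA ler_pM2r ?exprn_gt0 //.
  by rewrite mulrC; apply: pw_up.
have := pw_dn (leq_subr j k); rewrite (_ : (k - (k - j))%N = j); last by lia.
move=> H; have -> : rho ^+ k = rho ^+ (k - j) * rho ^+ j by rewrite -exprD subnK // ltnW.
by rewrite mulrA ler_pM2r ?exprn_gt0 // mulrC.
Qed.

Lemma prod_pos s (c : 'I_s -> nat) : (\sum_(i < s) c i = s * k)%N ->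
  (\prod_(i < s) a (c i) <= a k ^ s)%N.
Proof.
move=> Hs; rewrite -(@ler_nat rat) natr_prod natrX.
rewrite -(@ler_pM2r _ (rho ^+ (s * k))) ?exprn_gt0 //.
have E1 : \prod_(i < s) ((a (c i))%:R * rho ^+ k) = (\prod_(i < s) (a (c i))%:R) * rho ^+ (s * k).
  by rewrite big_split /= prodr_const card_ord -exprM mulnC.
have E2 : \prod_(i < s) ((a k)%:R * rho ^+ c i) = (a k)%:R ^+ s * rho ^+ (s * k).
  by rewrite big_split /= prodr_const card_ord prodrXr Hs.
rewrite -E1 -E2; apply: ler_prod => i _; rewrite keyg andbT.
by rewrite mulr_ge0 ?ler0n // exprn_ge0 // ltW.
Qed.

End Pos.

Lemma prod_le s k (c : 'I_s -> nat) : (\sum_(i < s) c i = s * k)%N ->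
  (\prod_(i < s) a (c i) <= a k ^ s)%N.
Proof.
case: k => [|K] Hs.
  have c0 : forall i, c i = 0%N.
    move=> i; apply/eqP; rewrite -leqn0; move: Hs; rewrite muln0 (bigD1 i) //=.
    lia.
  by rewrite (eq_bigr (fun _ => a 0%N)) ?prod_nat_const ?card_ord // => i _; rewrite c0.
case: (posnP (a K.+1)) => [z|p]; last exact: prod_pos.
case: s c Hs => [|s] c Hs; first by rewrite big_ord0.
have [i Hi] : exists i, (K.+1 <= c i)%N.
  apply/existsP; apply: contraT; rewrite negb_exists => /forallP H.
  have : (\sum_(i < s.+1) c i < \sum_(i < s.+1) K.+1)%N.
    rewrite big_ord_recr /= [X in (_ < X)%N]big_ord_recr /=.
    rewrite -addnS; apply: leq_add; first by apply: leq_sum => j _; apply: ltnW; rewrite ltnNge H.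
    by rewrite ltnNge H.
  by rewrite Hs sum_nat_const card_ord ltnn.
by rewrite (bigD1 i) //= (zero_ge Hi z) mul0n.
Qed.

End SeqLC.

Local Open Scope nat_scope.
Local Open Scope nat_scope.

Lemma DNm (T : finType) (e : rel T) j : 0 < m_ e j.+1 -> 0 < m_ e j.
Proof.
change (0 < #|Mset e j.+1| -> 0 < #|Mset e j|).
rewrite !card_gt0 => /set0Pn [M]; rewrite inE => /andP[mM /eqP cM].
have : 0 < #|M| by rewrite cM.
rewrite card_gt0 => /set0Pn [E EM].
apply/set0Pn; exists (M :\ E); rewrite inE; apply/andP; split.
  by apply: match_sub mM _; apply: subsetDl.
by move: (cardsD1 E M); rewrite EM cM add1n => -[->].
Qed.

Lemma match_le (T : finType) (e : rel T) n (M : {set {set T}}) :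
  (forall x, e x x = false) -> #|T| = 2 * n -> is_matching e M -> #|M| <= n.
Proof.
move=> irr cT mM; have := card_coverM irr mM; have := max_card (cover M).
rewrite cT; lia.
Qed.

Section Union.
Variables (T : finType) (e : rel T) (s : nat).
Hypothesis irr : forall x, e x x = false.
Notation T' := (prod 'I_s T).
Definition eU : rel T' := fun x y => (x.1 == y.1) && e x.2 y.2.
Notation SS := {set {set T}}.
Notation SS' := {set {set T'}}.

Definition iota (i : 'I_s) (E : {set T}) : {set T'} := [set (i, x) | x in E].

Lemma pair_inj (i : 'I_s) : injective (fun x : T => (i, x)).
Proof. by move=> x y [->]. Qed.

Lemma edgeU E' : E' \in edges eU -> exists i E, E \in edges e /\ E' = iota i E.
Proof.
case/imsetP=> [[[i a] [j b]]]; rewrite inE /eU /= => /andP[/eqP ij eab] ->.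
exists i, [set a; b]; split; first by apply/imsetP; exists (a, b); rewrite ?inE.
by rewrite /iota imsetU1 imset_set1 ij.
Qed.

Lemma iota_inj i j E F : F \in edges e -> iota i E = iota j F -> i = j /\ E = F.
Proof.
move=> Fe eq; have : #|F| = 2 by apply: edge2.
move=> cF; have : 0 < #|F| by rewrite cF.
rewrite card_gt0 => /set0Pn [x xF].
have : (j, x) \in iota i E by rewrite eq; apply/imsetP; exists x.
case/imsetP=> y _ [ji _]; subst j; split=> //.
exact: (imset_inj (@pair_inj i) eq).
Qed.

Definition phi (M : SS') : {dffun forall i : 'I_s, SS} := [ffun i => [set E | iota i E \in M]].

Lemma phi_match (M : SS') i : is_matching eU M -> is_matching e (phi M i).
Proof.
move=> mM; have [sub H] := matchP mM.
apply: matchI.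
  apply/subsetP=> E; rewrite ffunE inE => EM.
  have [j [F [Fe eq]]] := edgeU (subsetP sub _ EM).
  by have [_ ->] := iota_inj Fe eq.
move=> E F; rewrite !ffunE !inE => EM FM nEF.
rewrite -setI_eq0; apply/eqP/setP => x; rewrite !inE; apply/negbTE/negP => /andP[xE xF].
have eq : iota i E = iota i F.
  apply: (match_eq mM EM FM (x := (i, x))); by apply/imsetP; exists x.
by move: nEF; rewrite (imset_inj (@pair_inj i) eq) eqxx.
Qed.

Lemma phi_inj (M M' : SS') : M \subset edges eU -> M' \subset edges eU -> phi M = phi M' -> M = M'.
Proof.
move=> s1 s2 eq.
have H : forall N N' : SS', N \subset edges eU -> phi N = phi N' -> N \subset N'.
  move=> N N' sN eqN; apply/subsetP => E' E'N.
  have [i [E [Ee eqE]]] := edgeU (subsetP sN _ E'N).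
  rewrite eqE in E'N *.
  have : E \in phi N i by rewrite ffunE inE.
  by rewrite eqN ffunE inE.
by apply/eqP; rewrite eqEsubset (H _ _ s1 eq) (H _ _ s2 (esym eq)).
Qed.

Lemma phi_card (M : SS') : M \subset edges eU -> #|M| = \sum_i #|phi M i|.
Proof.
move=> sM.
pose P := [set p : 'I_s * {set T} | iota p.1 p.2 \in M].
have eqM : M = (fun p => iota p.1 p.2) @: P.
  apply/setP=> E'; apply/idP/imsetP.
    move=> E'M; have [i [E [Ee eqE]]] := edgeU (subsetP sM _ E'M).
    by exists (i, E); rewrite // inE /= -eqE.
  by case=> p; rewrite inE => pM ->.
have L : forall (U : finType) (A : {set U}), #|A| = \sum_x ((x \in A) : nat).
  move=> U A; rewrite -sum1_card big_mkcond /=; apply: eq_bigr => x _.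
  by case: (x \in A).
rewrite {1}eqM card_in_imset.
  rewrite L; under [RHS]eq_bigr do rewrite L.
  rewrite pair_big /=; apply: eq_bigr => -[i E] _.
  by rewrite !inE ffunE inE.
move=> [i E] [j F]; rewrite !inE /= => iE jF eq.
have [k [G [Ge eqG]]] := edgeU (subsetP sM _ iE).
have [h1 h2] := iota_inj Ge eqG.
rewrite eq in eqG; have [h3 h4] := iota_inj Ge eqG.
by rewrite h1 h2 h3 h4.
Qed.

Lemma countU (n k : nat) : (forall M : SS, is_matching e M -> #|M| <= n) ->
  m_ eU (s * k) <= n.+1 ^ s * m_ e k ^ s.
Proof.
move=> bnd.
change (#|Mset eU (s * k)| <= n.+1 ^ s * m_ e k ^ s).
have inj : {in Mset eU (s * k) &, injective phi}.
  move=> M M'; rewrite !inE => /andP[mM _] /andP[mM' _].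
  by apply: phi_inj; [case/matchP: mM | case/matchP: mM'].
rewrite -(card_in_imset inj).
set Img := phi @: Mset eU (s * k).
pose cof (f : {dffun forall i : 'I_s, SS}) : {ffun 'I_s -> 'I_n.+1} :=
  [ffun i => inord #|f i|].
rewrite -sum1_card (partition_big cof xpredT) //=.
have -> : n.+1 ^ s * m_ e k ^ s = \sum_(c : {ffun 'I_s -> 'I_n.+1}) m_ e k ^ s.
  by rewrite sum_nat_const card_ffun !card_ord.
apply: leq_sum => c _.
rewrite (eq_bigl (fun f => f \in [set f | (f \in Img) && (cof f == c)])); last first.
  by move=> f; rewrite inE.
rewrite sum1_card.
case: (set_0Vmem [set f | (f \in Img) && (cof f == c)]) => [->|[f0]].
  by rewrite cards0.
rewrite inE => /andP[/imsetP [M0 M0in ->] /eqP cM0].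
have cval : forall (M : SS') i, M \in Mset eU (s * k) -> cof (phi M) i = #|phi M i| :> nat.
  move=> M i; rewrite inE => /andP[mM _]; rewrite ffunE inordK // ltnS.
  by apply: bnd; apply: phi_match.
have sumc : \sum_i (c i : nat) = s * k.
  move: (M0in); rewrite inE => /andP[mM0 /eqP <-].
  rewrite (phi_card (proj1 (matchP mM0))); apply: eq_bigr => i _.
  by rewrite -cM0 cval.

apply: (@leq_trans #|setXn (fun i : 'I_s => Mset e (c i))|).
  apply: subset_leq_card; apply/subsetP => f; rewrite inE => /andP[/imsetP [M Min ->] /eqP cM].
  apply/setXnP => i; rewrite inE -cM cval // eqxx andbT.
  by apply: phi_match; move: Min; rewrite inE => /andP[].
rewrite cardsXn.
exact: (prod_le (a := m_ e) (LCm irr) (@DNm T e) (c := fun i => (c i : nat)) sumc).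
Qed.

End Union.

From Stdlib Require Import Reals Lra.

Section Props.
Local Open Scope nat_scope.
Variables (T : finType) (e : rel T) (s : nat).

Lemma eU_simple : simple_graph e -> simple_graph (eU e (s := s)).
Proof.
case=> sym irr; split=> [x y|x]; rewrite /eU.
  by rewrite eq_sym sym.
by rewrite irr andbF.
Qed.

Lemma eU_regular d : regular e d -> regular (eU e (s := s)) d.
Proof.
move=> rg x; rewrite -(rg x.2).
have -> : [set y | eU e x y] = (fun z => (x.1, z)) @: [set z | e x.2 z].
  apply/setP=> -[i z]; rewrite inE /eU /=; apply/idP/imsetP.
    by case/andP=> /eqP <- exz; exists z; rewrite ?inE.
  by case=> z'; rewrite inE => ez -[-> ->]; rewrite eqxx.
by rewrite card_imset //; apply: pair_inj.
Qed.

Lemma eU_bip : bipartite e -> bipartite (eU e (s := s)).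
Proof.
case=> A HA; exists [set x : 'I_s * T | x.2 \in A] => x y; rewrite /eU !inE.
by case/andP=> _ /HA.
Qed.

Lemma eU_card : #|{: 'I_s * T}| = s * #|T|.
Proof. by rewrite card_prod card_ord. Qed.

End Props.

Local Open Scope R_scope.

Lemma ln_nonpos x : x <= 0 -> ln x = 0.
Proof. by move=> h; rewrite /ln; case: Rlt_dec => // ?; exfalso; lra. Qed.

Lemma ln_INR_le a b : (a <= b)%nat -> ln (INR a) <= ln (INR b).
Proof.
move=> ab; case: a ab => [|a] ab.
  rewrite (ln_nonpos (x := INR 0)) /=; last lra.
  case: b ab => [|b] _; first by rewrite ln_nonpos /=; lra.
  have : 1 <= INR b.+1 by apply: (le_INR 1); apply/ssrnat.leP.
  move=> h; case: (Req_dec (INR b.+1) 1) => [->|n1]; first by rewrite ln_1; lra.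
  rewrite -ln_1; left; apply: ln_increasing; lra.
have ha : 0 < INR a.+1 by apply: lt_0_INR; apply/ssrnat.ltP.
have := le_INR _ _ (elimT ssrnat.leP ab) => h.
case: h => h; [left; apply: ln_increasing | right; rewrite h]; lra.
Qed.

Lemma ln_INR_ge0 a : 0 <= ln (INR a).
Proof.
have := ln_INR_le (leq0n a); rewrite (ln_nonpos (x := INR 0)) //=; lra.
Qed.

Lemma INR_expn p s : INR (expn p s) = INR p ^ s.
Proof.
elim: s => [|s IH]; first by rewrite expn0.
by rewrite expnS mulnE mult_INR IH.
Qed.

Lemma ln_bound (p m s : nat) : (0 < p)%nat ->
  ln (INR (muln (expn p s) (expn m s))) <= INR s * (ln (INR p) + ln (INR m)).
Proof.
move=> pp; have hp : 0 < INR p by apply: lt_0_INR; apply/ssrnat.ltP.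
case: m => [|m].
  case: s => [|s].
    by rewrite !expn0 /= ln_1; lra.
  rewrite exp0n // muln0 /= (ln_nonpos (x := 0)); last lra.
  have := ln_INR_ge0 p; have := pos_INR s.+1; have : ln (INR 0) = 0 by apply: ln_nonpos; simpl; lra.
  simpl; nra.
have hm : 0 < INR m.+1 by apply: lt_0_INR; apply/ssrnat.ltP.
rewrite mulnE mult_INR !INR_expn ln_mult ?ln_pow; try apply: pow_lt; try lra.
Qed.

Open Scope R_scope.
Open Scope R_scope.

Lemma Gd0 d : (0 < d)%nat -> Gd d 0 = 0.
Proof.
move=> hd; have hD : 0 < INR d by apply: lt_0_INR; apply/ssrnat.ltP.
have x0 : forall b, xln 0 b = 0.
  by move=> b; rewrite /xln; destruct (Req_EM_T 0 0).
have xn : forall a b, a <> 0 -> xln a b = a * ln b.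
  by move=> a b h; rewrite /xln; destruct (Req_EM_T a 0).
rewrite /Gd x0 !xn; try lra.
rewrite /Rdiv Rmult_0_l !Rminus_0_r ln_1; lra.
Qed.

Theorem corollary3p2 (d : nat) (hd : (0 < d)%nat) :
  (exists eps : nat -> R, Un_cv eps 0 /\
     forall (T : finType) (e : rel T) (n k : nat),
       simple_graph e -> regular e d -> bipartite e ->
       #|T| = (2 * n)%nat -> (k <= n)%nat ->
       ln (INR (m_ e k)) / INR #|T| >= Gd d (INR k / INR n) - eps #|T|) ->
  forall (T : finType) (e : rel T) (n k : nat),
    simple_graph e -> regular e d -> bipartite e ->
    #|T| = (2 * n)%nat -> (k <= n)%nat ->
    ln (INR (m_ e k)) / INR #|T| >= Gd d (INR k / INR n) - ln (INR #|T|) / INR #|T|.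
Proof.
move=> [eps [Heps H]] T e n k sg rg bp cT kn.
have irr := proj2 sg.
rewrite cT.
case: n cT kn => [|n] cT kn.
  have -> : k = 0%nat by apply/eqP; rewrite -leqn0.
  have -> : INR (2 * 0) = 0 by [].
  rewrite /Rdiv Rinv_0 !Rmult_0_r Gd0 //; lra.
set N := n.+1.
have hN : 0 < INR N by apply: lt_0_INR; apply/ssrnat.ltP.
have h2N : INR (2 * N) = 2 * INR N by rewrite mulnE mult_INR.
set X := (ln (INR N.+1) + ln (INR (m_ e k))) / INR (2 * N).
have HX : forall s, (0 < s)%nat -> Gd d (INR k / INR N) - eps (s * (2 * N))%nat <= X.
  move=> s hs.
  have hS : 0 < INR s by apply: lt_0_INR; apply/ssrnat.ltP.
  have cT' : #|{: 'I_s * T}| = (2 * (N * s))%nat by rewrite eU_card cT mulnCA [(s * N)%nat]mulnC.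
  have ks : (s * k <= N * s)%nat by rewrite mulnC leq_mul2r kn orbT.
  have := H _ (eU e (s := s)) (N * s)%nat (s * k)%nat (eU_simple s sg) (eU_regular (s := s) rg)
     (eU_bip s bp) cT' ks.
  rewrite cT' (_ : INR (s * k) / INR (N * s) = INR k / INR N); last first.
    rewrite !mulnE !mult_INR; field; lra.
  have -> : (2 * (N * s))%nat = (s * (2 * N))%nat by rewrite [(N * s)%nat]mulnC mulnCA.
  have hcnt := countU s irr (n := N) k (fun M mM => match_le (n := N) irr cT mM).
  have hl := ln_INR_le hcnt.
  have hb := ln_bound (m_ e k) s (ltn0Sn N).
  have hd2 : INR (s * (2 * N)) = INR s * INR (2 * N) by rewrite mulnE mult_INR.
  rewrite hd2 => Hs.
  suff : ln (INR (m_ (eU e (s := s)) (s * k))) / (INR s * INR (2 * N)) <= X by lra.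
  rewrite /X; apply: (Rle_trans _ (INR s * (ln (INR N.+1) + ln (INR (m_ e k))) / (INR s * INR (2 * N)))).
    rewrite /Rdiv; apply: Rmult_le_compat_r; first by left; apply: Rinv_0_lt_compat; nra.
    lra.
  right; field; lra.
have HXG : Gd d (INR k / INR N) <= X.
  apply: Rnot_lt_le => lt.
  have [M HM] := Heps (Gd d (INR k / INR N) - X) ltac:(lra).
  have : (M <= M.+1 * (2 * N))%nat.
    by apply: leq_trans (leqnSn M) _; rewrite leq_pmulr // muln_gt0.
  move/ssrnat.leP=> hM; have := HM _ hM; rewrite /R_dist Rminus_0_r => ab.
  have := HX M.+1 (ltn0Sn M); have := Rle_abs (eps (M.+1 * (2 * N))%nat); lra.
have hD : 0 < INR (2 * N) by rewrite h2N; lra.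
have h12 : (N.+1 <= 2 * N)%nat by rewrite mul2n -addnn -(addn1 N) leq_add2l.
have hl := ln_INR_le h12.
have hdiv : ln (INR N.+1) / INR (2 * N) <= ln (INR (2 * N)) / INR (2 * N).
  by rewrite /Rdiv; apply: Rmult_le_compat_r => //; left; apply: Rinv_0_lt_compat.
move: HXG; rewrite /X /Rdiv Rmult_plus_distr_r -!/(Rdiv _ _) => HXG.
lra.
Qed.
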